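(* Let $A\in\mathbb{R}^{m\times n}$ have no zero row, with rows $a_1^T,\dots,a_m^T$, let ${\bf u}=(\mu_1,\dots,\mu_m)\in\mathbb{R}^m$, $P_k(\mu_k)=I-\mu_k a_ka_k^T/\|a_k\|_2^2$, $Q_i({\bf u}_i)=P_m(\mu_m)\cdots P_{i+1}(\mu_{i+1})$ for $1\le i\le m-1$, $Q_m({\bf u}_m)=I$, and $A_{\mathcal S}({\bf u})=(Q_1({\bf u}_1)a_1,\dots,Q_m({\bf u}_m)a_m)^T$. Let $h_{k,l}=a_k^Ta_l/\|a_l\|_2^2$ and, for $1\le i<j\le m$, $$d_{i,j}({\bf u}_i)=\sum_{v=2}^{j-i+1}(-1)^{v-1}\sum_{i=t_1<t_2<\dots<t_v=j}\ \prod_{s=1}^{v-1}\mu_{t_{s+1}}\prod_{s=1}^{v-1}h_{t_s,t_{s+1}},$$ the inner sum being over strictly increasing integer sequences from $i$ to $j$ of length $v$. Define $\Omega({\bf u})=(\omega_{i,j})\in\mathbb{R}^{m\times m}$ by $\omega_{i,j}=d_{i,j}({\bf u}_i)$ if $j>i$, $\omega_{i,i}=1$, and $\omega_{i,j}=0$ if $j<i$. Then $$A_{\mathcal S}({\bf u})=\Omega({\bf u})A.$$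
   Context: ${\bf u}_i=(\mu_{i+1},\dots,\mu_m)$. *)

(* Defs.v *)
(* Indices are 0-based: row k of A (k : 'I_m) is a_{k+1}. *)
From HB Require Import structures.
From mathcomp Require Import all_boot all_order all_algebra.
Set Implicit Arguments. Unset Strict Implicit. Unset Printing Implicit Defensive.
Import Order.TTheory GRing.Theory Num.Theory.
Local Open Scope ring_scope.

Section Kaczmarz.
Variables (R : realFieldType) (m n : nat).

Definition arow (A : 'M[R]_(m, n)) (k : 'I_m) : 'rV[R]_n := row k A.

Definition sqnorm (A : 'M[R]_(m, n)) (k : 'I_m) : R :=
  (arow A k *m (arow A k)^T) 0 0.

Definition Pk (A : 'M[R]_(m, n)) (u : 'rV[R]_m) (k : 'I_m) : 'M[R]_n :=
  1%:M - (u 0 k / sqnorm A k) *: ((arow A k)^T *m arow A k).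

(* Q_i(u_i) = P_m ... P_{i+1}  (identity for the last index).
   In 0-based indices: product of Pk k for k = i+1, ..., m-1, with larger k on the left. *)
Definition Qi (A : 'M[R]_(m, n)) (u : 'rV[R]_m) (i : 'I_m) : 'M[R]_n :=
  foldr (fun k M => M *m Pk A u k) 1%:M [seq k <- enum 'I_m | (nat_of_ord i < nat_of_ord k)%N].

Definition AS (A : 'M[R]_(m, n)) (u : 'rV[R]_m) : 'M[R]_(m, n) :=
  \matrix_(i < m, j < n) (Qi A u i *m (arow A i)^T) j 0.

Definition hkl (A : 'M[R]_(m, n)) (k l : 'I_m) : R :=
  (arow A k *m (arow A l)^T) 0 0 / sqnorm A l.

Definition incr_chain (v : nat) (i j : 'I_m) (t : v.-tuple 'I_m) : bool :=
  [&& nth i t 0 == i, nth i t v.-1 == j & sorted (fun a b : 'I_m => (a < b)%N) t].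

Definition dij (A : 'M[R]_(m, n)) (u : 'rV[R]_m) (i j : 'I_m) : R :=
  \sum_(2 <= v < (j - i).+2)
    (-1) ^+ v.-1 *
    \sum_(t : v.-tuple 'I_m | incr_chain i j t)
      ((\prod_(s < v.-1) u 0 (nth i t s.+1)) *
       (\prod_(s < v.-1) hkl A (nth i t s) (nth i t s.+1))).

Definition Omega (A : 'M[R]_(m, n)) (u : 'rV[R]_m) : 'M[R]_m :=
  \matrix_(i < m, j < m)
    (if (i < j)%N then dij A u i j else if i == j then 1 else 0).

End Kaczmarz.

(* Main.v *)
Require Import Defs.
From HB Require Import structures.
From mathcomp Require Import all_boot all_order all_algebra.
From mathcomp Require Import zify.
Set Implicit Arguments. Unset Strict Implicit. Unset Printing Implicit Defensive.
Import Order.TTheory GRing.Theory Num.Theory.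
Local Open Scope ring_scope.

Lemma sum_tupleS (R : nmodType) (T : finType) (w : nat) (G : (w.+1).-tuple T -> R) :
  \sum_(t : (w.+1).-tuple T) G t = \sum_(x : T) \sum_(t : w.-tuple T) G [tuple of x :: t].
Proof.
rewrite pair_big /=.
rewrite (reindex (fun p : T * w.-tuple T => [tuple of p.1 :: p.2])) //=.
exists (fun t : (w.+1).-tuple T => (thead t, [tuple of behead t])).
  by move=> [x t] _ /=; congr pair; apply: val_inj.
by move=> t _; rewrite [in RHS](tuple_eta t).
Qed.

Lemma sum_tuple0 (R : nmodType) (T : finType) (G : 0.-tuple T -> R) :
  \sum_(t : 0.-tuple T) G t = G [tuple].
Proof. by rewrite (big_pred1 [tuple]) // => t; rewrite [t]tuple0 /= eqxx. Qed.

Lemma sorted_last (m : nat) (s : seq 'I_m) (x : 'I_m) :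
  sorted (fun a b : 'I_m => (a < b)%N) (x :: s) -> (x + size s <= last x s)%N.
Proof.
elim: s x => [|y s IH] x /=; first by rewrite addn0.
move=> /andP [xy ps]; have := IH y ps; rewrite addnS; apply: leq_trans.
by rewrite ltn_add2r.
Qed.

Lemma chain_bound (m v : nat) (i j : 'I_m) (t : (v.+1).-tuple 'I_m) :
  incr_chain i j t -> (i + v <= j)%N.
Proof.
case: t => [[|x s] //= Hs]; rewrite /incr_chain /= => /and3P [/eqP xi].
have -> : v = size s by move/eqP: Hs => [].
rewrite -[size s]/((size (x :: s)).-1) nth_last /= => /eqP <- srt.
by rewrite -xi; apply: sorted_last.
Qed.

Section S.
Variables (R : realFieldType) (m n : nat) (A : 'M[R]_(m, n)) (u : 'rV[R]_m).

Definition Fch (v : nat) (d : 'I_m) (t : seq 'I_m) : R :=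
  (\prod_(s < v.-1) u 0 (nth d t s.+1)) *
  (\prod_(s < v.-1) hkl A (nth d t s) (nth d t s.+1)).

Definition Sch (v : nat) (i j : 'I_m) : R :=
  \sum_(t : v.-tuple 'I_m | incr_chain i j t) Fch v i t.

Lemma dijE (i j : 'I_m) : dij A u i j = \sum_(2 <= v < (j - i).+2) (-1) ^+ v.-1 * Sch v i j.
Proof. by []. Qed.

Lemma S_zero v (i j : 'I_m) : ~~ (i + v <= j)%N -> Sch v.+1 i j = 0.
Proof.
move=> H; apply: big1 => t /chain_bound; by rewrite (negbTE H).
Qed.

Lemma S1 (i j : 'I_m) : Sch 1 i j = (i == j)%:R.
Proof.
rewrite /Sch big_mkcond sum_tupleS /=.
under eq_bigr => x _ do rewrite sum_tuple0 /incr_chain /= /Fch !big_ord0 mulr1.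
rewrite (bigD1 i) //= big1 ?addr0; last first.
  by move=> x /negbTE xi; rewrite xi.
by rewrite eqxx /=; case: (i == j).
Qed.

Definition cc (i k : 'I_m) : R := u 0 k * hkl A i k.

Lemma SS w (i j : 'I_m) : Sch w.+2 i j = \sum_(k : 'I_m | (i < k)%N) cc i k * Sch w.+1 k j.
Proof.
rewrite /Sch big_mkcond sum_tupleS /=.
rewrite (bigD1 i) //= [X in _ + X]big1 ?addr0; last first.
  move=> x /negbTE xi; apply: big1 => t _.
  by rewrite /incr_chain /= xi.
rewrite sum_tupleS.
rewrite [RHS]big_mkcond /=; apply: eq_bigr => k _.
rewrite [in RHS]big_mkcond sum_tupleS /=.
case: ifP => ik; last first.
  apply: big1 => t _; rewrite /incr_chain /= ik /=.
  by rewrite !andbF.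
rewrite (bigD1 k) //= [X in _ * (_ + X)]big1 ?addr0; last first.
  move=> x /negbTE xi; apply: big1 => t _.
  by rewrite /incr_chain /= xi.
rewrite mulr_sumr; apply: eq_bigr => t _.
have szt : size (k :: t) = w.+1 by rewrite /= size_tuple.
rewrite /incr_chain /= !eqxx ik /=.
rewrite (set_nth_default k i) ?szt //.
case: ifP => _; last by rewrite mulr0.
rewrite /Fch /= !big_ord_recl /= /cc.
have E1 : forall s : 'I_w, nth i t s = nth k t s.
  by move=> s; apply: set_nth_default; rewrite size_tuple.
have E2 : forall s : 'I_w, nth i (k :: t) s = nth k (k :: t) s.
  by move=> s; apply: set_nth_default; rewrite szt; exact: ltnW (ltn_ord s).
rewrite mulrACA; congr (_ * (_ * _)); apply: eq_bigr => s _; by rewrite add0n ?E1 ?E2.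
Qed.

End S.

Section D.
Variables (R : realFieldType) (m n : nat) (A : 'M[R]_(m, n)) (u : 'rV[R]_m).

Definition D (i j : 'I_m) : R := \sum_(0 <= w < m.+1) (-1) ^+ w * Sch A u w.+1 i j.

Lemma Sz w (i j : 'I_m) : (j < i + w)%N -> Sch A u w.+1 i j = 0.
Proof. by move=> h; apply: S_zero; rewrite -ltnNge. Qed.

Lemma D_rec (i j : 'I_m) :
  D i j = (i == j)%:R - \sum_(k : 'I_m | (i < k)%N) cc A u i k * D k j.
Proof.
rewrite /D big_nat_recl // expr0 mul1r S1; congr (_ + _).
transitivity (\sum_(0 <= w < m) \sum_(k : 'I_m | (i < k)%N)
                 - (cc A u i k * ((-1) ^+ w * Sch A u w.+1 k j))).
  apply: eq_bigr => w _; rewrite SS mulr_sumr; apply: eq_bigr => k _.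
  by rewrite exprS mulN1r mulNr mulrCA.
rewrite exchange_big /= -sumrN; apply: eq_bigr => k _.
rewrite sumrN -mulr_sumr big_nat_recr //= (@Sz m k j) ?mulr0 ?addr0 //.
have := ltn_ord j; lia.
Qed.

Lemma Omega_D (i j : 'I_m) : Omega A u i j = D i j.
Proof.
rewrite /Omega mxE /D [RHS]big_ltn // expr0 mul1r S1.
case: ltngtP => hij.
- have -> : (i == j) = false by apply/negbTE; rewrite -val_eqE /= neq_ltn hij.
  rewrite add0r dijE [LHS]big_add1 /= [RHS](@big_cat_nat _ _ _ (j - i).+1) //=; last first.
    have := ltn_ord j; lia.
  rewrite [X in _ = _ + X]big_nat_cond [X in _ = _ + X]big1 ?addr0 //.
  move=> w /andP [/andP [h1 h2] _]; rewrite Sz ?mulr0 //; lia.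
- have -> : (i == j) = false by apply/negbTE; rewrite -val_eqE /= neq_ltn hij orbT.
  rewrite add0r big_nat_cond big1 // => w /andP [/andP [h1 h2] _].
  rewrite Sz ?mulr0 //; lia.
- have -> : i = j by apply: val_inj.
  rewrite eqxx big_nat_cond big1 ?addr0 // => w /andP [/andP [h1 h2] _].
  rewrite Sz ?mulr0 //; lia.
Qed.

End D.

Section M.
Variables (R : realFieldType) (m n : nat) (A : 'M[R]_(m, n)) (u : 'rV[R]_m).

Lemma L_val (i : 'I_m) :
  map val [seq k <- enum 'I_m | (nat_of_ord i < nat_of_ord k)%N] = iota i.+1 (m - i.+1).
Proof.
have -> : map val [seq k <- enum 'I_m | (nat_of_ord i < nat_of_ord k)%N] =
          [seq x <- map val (enum 'I_m) | (i < x)%N] by rewrite filter_map.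
rewrite val_enum_ord.
have -> : iota 0 m = iota 0 (i.+1 + (m - i.+1)) by rewrite subnKC.
rewrite iotaD filter_cat add0n.
rewrite (@eq_in_filter _ _ pred0); last by move=> x; rewrite mem_iota /=; lia.
rewrite filter_pred0 /=.
rewrite (@eq_in_filter _ _ predT) ?filter_predT //.
by move=> x; rewrite mem_iota /=; lia.
Qed.

Lemma Qi_rec (i : 'I_m) (h : (i.+1 < m)%N) :
  Qi A u i = Qi A u (Ordinal h) *m Pk A u (Ordinal h).
Proof.
rewrite /Qi.
have -> : [seq k <- enum 'I_m | (nat_of_ord i < nat_of_ord k)%N] =
          Ordinal h :: [seq k <- enum 'I_m | (nat_of_ord (Ordinal h) < nat_of_ord k)%N].
  by apply: (inj_map val_inj); rewrite map_cons !L_val -(subnSK h).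
by [].
Qed.

Lemma Qi_last (i : 'I_m) : ~~ (i.+1 < m)%N -> Qi A u i = 1%:M.
Proof.
move=> h; rewrite /Qi.
have -> : [seq k <- enum 'I_m | (nat_of_ord i < nat_of_ord k)%N] = [::].
  apply: (inj_map val_inj); rewrite /= !L_val /=.
  by have -> : (m - i.+1 = 0)%N by lia.
by [].
Qed.

Lemma Pk_sym (k : 'I_m) : (Pk A u k)^T = Pk A u k.
Proof.
by rewrite /Pk linearB /= linearZ /= trmx1 trmx_mul trmxK.
Qed.

Lemma tele (i : 'I_m) (x : 'rV[R]_n) :
  x *m (Qi A u i)^T =
  x - \sum_(k : 'I_m | (i < k)%N) (x *m (1%:M - Pk A u k)) *m (Qi A u k)^T.
Proof.
suff H : forall d (i : 'I_m) (x : 'rV[R]_n), (m - i <= d)%N ->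
  x *m (Qi A u i)^T =
  x - \sum_(k : 'I_m | (i < k)%N) (x *m (1%:M - Pk A u k)) *m (Qi A u k)^T.
  by apply: H (leqnn _).
elim=> [|d IH] {}i {}x hd.
  by have := ltn_ord i; lia.
case: (boolP (i.+1 < m)%N) => h; last first.
  rewrite Qi_last // trmx1 mulmx1 big1 ?subr0 // => k hk.
  by have := ltn_ord k; lia.
rewrite Qi_rec trmx_mul Pk_sym mulmxA.
have -> : x *m Pk A u (Ordinal h) = x - x *m (1%:M - Pk A u (Ordinal h)).
  by rewrite mulmxBr mulmx1 subKr.
rewrite mulmxBl IH /=; last by lia.
rewrite [in RHS](bigD1 (Ordinal h)) //=.
have -> : \sum_(k : 'I_m | (i < k)%N && (k != Ordinal h))
            (x *m (1%:M - Pk A u k)) *m (Qi A u k)^T =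
          \sum_(k : 'I_m | (i.+1 < k)%N)
            (x *m (1%:M - Pk A u k)) *m (Qi A u k)^T.
  apply: eq_bigl => k; rewrite -val_eqE /=; apply/idP/idP; lia.
set T := (x *m _ *m (Qi A u (Ordinal h))^T); set SS0 := \sum_(k < m | _) _.
by rewrite (opprD T SS0) addrA addrAC.
Qed.

Lemma AS_row (i : 'I_m) : row i (AS A u) = arow A i *m (Qi A u i)^T.
Proof.
have -> : row i (AS A u) = (Qi A u i *m (arow A i)^T)^T.
  by apply/rowP => j; rewrite !mxE.
by rewrite trmx_mul trmxK.
Qed.

Lemma AS_rec (i : 'I_m) :
  row i (AS A u) = row i A - \sum_(k : 'I_m | (i < k)%N) cc A u i k *: row k (AS A u).
Proof.
rewrite AS_row tele; congr (_ - _); apply: eq_bigr => k _.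
rewrite AS_row scalemxAl; congr (_ *m _).
rewrite /Pk subKr -scalemxAr mulmxA [arow A i *m _]mx11_scalar mul_scalar_mx.
rewrite scalerA /cc /hkl; congr (_ *: _).
by rewrite mulrAC mulrA.
Qed.

End M.

Section F.
Variables (R : realFieldType) (m n : nat) (A : 'M[R]_(m, n)) (u : 'rV[R]_m).

Definition RO (i : 'I_m) : 'rV[R]_n := \sum_j D A u i j *: row j A.

Lemma RO_row (i : 'I_m) : row i (Omega A u *m A) = RO i.
Proof.
rewrite row_mul mulmx_sum_row; apply: eq_bigr => j _.
by rewrite mxE Omega_D.
Qed.

Lemma RO_rec (i : 'I_m) :
  RO i = row i A - \sum_(k : 'I_m | (i < k)%N) cc A u i k *: RO k.
Proof.
rewrite /RO; under eq_bigr do rewrite D_rec scalerBl.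
rewrite sumrB; congr (_ - _).
  rewrite (bigD1 i) //= eqxx scale1r big1 ?addr0 // => j.
  by rewrite eq_sym => /negbTE ->; rewrite scale0r.
under eq_bigr do rewrite scaler_suml.
rewrite exchange_big /=; apply: eq_bigr => k _.
rewrite scaler_sumr; apply: eq_bigr => j _.
by rewrite scalerA.
Qed.

Lemma main_rows (i : 'I_m) : row i (AS A u) = RO i.
Proof.
suff H : forall d (i : 'I_m), (m - i <= d)%N -> row i (AS A u) = RO i.
  exact: H (leqnn _).
elim=> [|d IH] {}i hd; first by have := ltn_ord i; lia.
rewrite AS_rec RO_rec; congr (_ - _); apply: eq_bigr => k hk.
by rewrite IH //; lia.
Qed.

End F.

Theorem theorem3p8 (R : realFieldType) (m n : nat) (A : 'M[R]_(m, n))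
  (hA : forall k : 'I_m, row k A != 0) (u : 'rV[R]_m) :
  AS A u = Omega A u *m A.
Proof.
apply/row_matrixP => i; by rewrite main_rows RO_row.
Qed.
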